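(* Let $F$ be a probability distribution over $[a,\infty)$, $a\ge0$, such that $\mathrm{Rev}(F^m)<\infty$. For $b\ge a$ let $F_b$ denote the truncation of $F$ to $[a,b]$. If $\lim_{b\to\infty}\mathrm{Rev}(F_b^m)$ exists (converges), then $\lim_{b\to\infty}\mathrm{Rev}(F_b^m)=\mathrm{Rev}(F^m)$.
   Context: For a distribution $G$ on $\mathbb R_+^m$, $\mathrm{Rev}(G)$ is the supremum of the expected revenue over all (possibly randomized) incentive compatible and individually rational mechanisms for selling $m$ items to a single buyer with additive valuations whose value vector is drawn from $G$. $F^m$ denotes the product distribution (values i.i.d. from $F$). The truncation $F_b$ is the distribution on $[a,b]$ with cdf $F_b(x)=F(x)/F(b)$ for $x\in[a,b]$. *)

(* Defs.v *)
From HB Require Import structures.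
From mathcomp Require Import all_boot all_order all_algebra.
From mathcomp Require Import all_classical all_reals.
From mathcomp Require Import ereal topology normedtype sequences measure lebesgue_measure lebesgue_integral probability.

Set Implicit Arguments.
Unset Strict Implicit.
Unset Printing Implicit Defensive.

Import Order.TTheory GRing.Theory Num.Theory.
Local Open Scope classical_set_scope.
Local Open Scope ring_scope.

Section Auction.
Variables (R : realType) (m : nat).

Definition types : set (m.-tuple R) := [set v | forall i : 'I_m, 0 <= tnth v i].

(* buyer of type v reports v' : additive expected utility for the lottery
   q v' (allocation probabilities of the m items) and expected payment p v' *)
Definition utility (q : m.-tuple R -> 'I_m -> R) (p : m.-tuple R -> R)
  (v v' : m.-tuple R) : R :=
  \sum_(i < m) tnth v i * q v' i - p v'.

Definition IC_IR_mechanism (q : m.-tuple R -> 'I_m -> R) (p : m.-tuple R -> R) : Prop :=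
  [/\ (forall v, types v -> forall i, 0 <= q v i <= 1),
      (forall v v', types v -> types v' -> utility q p v v' <= utility q p v v),
      (forall v, types v -> 0 <= utility q p v v) &
      measurable_fun types p].

Definition Rev (G : probability (m.-tuple R) R) : \bar R :=
  ereal_sup [set r | exists q p, IC_IR_mechanism q p /\
                        r = (\int[G]_(v in types) (p v)%:E)%E].

Definition is_iid_product (G : probability (m.-tuple R) R) (P : set R -> \bar R) : Prop :=
  forall A : 'I_m -> set R, (forall i, measurable (A i)) ->
    G [set v | forall i, A i (tnth v i)] = (\prod_(i < m) P (A i))%E.

End Auction.

Definition truncation (R : realType) (F : probability R R) (a b : R) : set R -> \bar R :=
  fun A => (F (A `&` `[a, b]%classic) / F `[a, b]%classic)%E.

(* Main.v *)
Require Import Defs.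
From HB Require Import structures.
From mathcomp Require Import all_boot all_order all_algebra.
From mathcomp Require Import all_classical all_reals.
From mathcomp Require Import ereal topology normedtype sequences measure lebesgue_measure lebesgue_integral probability.
From mathcomp Require Import measurable_realfun numfun.
From mathcomp Require Import lra.
Import Order.TTheory GRing.Theory Num.Theory.
Local Open Scope classical_set_scope.
Local Open Scope ring_scope.
Set Implicit Arguments. Unset Strict Implicit.

Section Aux.
Variables (R : realType) (m : nat).
Definition rect (A : 'I_m -> set R) : set (m.-tuple R) :=
  [set v | forall i, A i (tnth v i)].

Lemma rect_measurable A : (forall i, measurable (A i)) -> measurable (rect A).
Proof.
move=> mA.
have -> : rect A = \bigcap_(i in [set: 'I_m]) ((fun v => tnth v i) @^-1` A i).
  apply/seteqP; split => v /= H i. by move=> _; exact: H. exact: H.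
apply: fin_bigcap_measurable; first exact: finite_finset.
move=> i _; rewrite -[X in measurable X]setTI; exact: measurable_tnth.
Qed.
Definition Rects : set (set (m.-tuple R)) :=
  [set rect A | A in [set A | forall i, measurable (A i)]].

Lemma Rects_meas : Rects `<=` measurable.
Proof. by move=> _ [A mA <-]; exact: rect_measurable. Qed.

Lemma tuple_meas_gen : (@measurable _ (m.-tuple R)) = <<s Rects >>.
Proof.
apply/seteqP; split; last first.
  by apply: smallest_sub; [exact: sigma_algebra_measurable|exact: Rects_meas].
rewrite /measurable /=.
apply: smallest_sub; first exact: smallest_sigma_algebra.
move=> Y; rewrite -bigcup_seq => -[i _ [B mB <-]].
apply: sub_sigma_algebra.
exists (fun j => if j == i then B else setT).
  by move=> j /=; case: ifP.
apply/seteqP; split => v /=.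
  by move=> /(_ i); rewrite eqxx.
by move=> [_ H] j; case: ifP => // /eqP ->.
Qed.
Lemma rectI A B : rect A `&` rect B = rect (fun i => A i `&` B i).
Proof.
apply/seteqP; split => v /=; first by move=> [H1 H2] i; split.
by move=> H; split => i; case: (H i).
Qed.

Lemma rectT : rect (fun _ => setT) = setT.
Proof. by apply/seteqP; split. Qed.

Lemma tuple_measure_unique (m1 m2 : {measure set (m.-tuple R) -> \bar R}) :
  (forall A, (forall i, measurable (A i)) -> m1 (rect A) = m2 (rect A)) ->
  (m1 setT < +oo)%E ->
  forall X, measurable X -> m1 X = m2 X.
Proof.
move=> h12 hfin X mX.
apply: (measure_unique Rects (fun _ => setT)) => //.
- exact: tuple_meas_gen.
- move=> _ _ [A mA <-] [B mB <-]; rewrite rectI; exists (fun i => A i `&` B i) => //.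
  by move=> i; exact: measurableI.
- by move=> _; exists (fun _ => setT) => //; exact: rectT.
- by rewrite bigcup_const.
- by move=> _ [A mA <-]; exact: h12.
Qed.
End Aux.

Lemma probE (R : realType) d (T : measurableType d) (P : probability T R) A :
  measurable A -> P A = (fine (P A))%:E.
Proof.
move=> mA; rewrite fineK// ge0_fin_numE ?measure_ge0//.
exact: (le_lt_trans (probability_le1 P mA) (ltry _)).
Qed.

Section Main.
Variables (R : realType) (m : nat) (F : probability R R) (a : R)
  (G : probability (m.-tuple R) R) (Gb : R -> probability (m.-tuple R) R).
Hypothesis hG : is_iid_product G F.
Hypothesis hGb : forall b, a <= b -> (0 < F `[a, b]%classic)%E ->
  is_iid_product (Gb b) (truncation F a b).

Definition box b : set (m.-tuple R) := rect (fun _ : 'I_m => `[a, b]%classic).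

Lemma box_meas b : measurable (box b).
Proof. by apply: rect_measurable => i; exact: measurable_itv. Qed.

Lemma GbE b : a <= b -> (0 < F `[a, b]%classic)%E -> forall X, measurable X ->
  Gb b X = (((fine (F `[a, b]%classic) ^+ m)^-1)%:E * G (X `&` box b))%E.
Proof.
move=> ab Fb X mX.
set c := fine (F `[a, b]%classic).
have mI : measurable (`[a, b]%classic : set R) by exact: measurable_itv.
have Fc : F `[a, b]%classic = c%:E by rewrite /c -probE.
have c0 : 0 < c by rewrite -lte_fin -Fc.
have K0 : 0 <= (c ^+ m)^-1 by rewrite invr_ge0 exprn_ge0// ltW.
pose m2 := mscale (NngNum K0) (mrestr G (box_meas b)).
have := @tuple_measure_unique R m (Gb b) m2 _ _ X mX; apply.
- move=> A mA.
  change (Gb b (rect A) = ((c ^- m)%:E * G (rect A `&` box b))%E).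
  rewrite /box rectI.
  have mAI i : measurable (A i `&` `[a, b]%classic) by exact: measurableI.
  rewrite [LHS](hGb ab Fb mA) [X in (_ * X)%E](hG mAI) /truncation Fc inver gt_eqF//.
  under eq_bigr do rewrite probE//.
  rewrite prodEFin.
  under [X in (_ * X)%E]eq_bigr do rewrite (probE _ (mAI _)).
  rewrite prodEFin -EFinM; congr EFin.
  by rewrite big_split /= prodr_const card_ord exprVn mulrC.
- by rewrite [X in (X < _)%E]probability_setT ltry.
Qed.
End Main.

Lemma int_mono (R : realType) d (T : measurableType d) (mu : {measure set T -> \bar R})
  (D : set T) (f g : T -> \bar R) : measurable D -> measurable_fun D f ->
  measurable_fun D g -> (forall x, D x -> (f x <= g x)%E) ->
  (\int[mu]_(x in D) f x <= \int[mu]_(x in D) g x)%E.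
Proof.
move=> mD mf mg fg; rewrite integralE [X in (_ <= X)%E]integralE.
apply: leeB.
  apply: (@ge0_le_integral _ _ _ mu D mD).
  - by move=> x _; exact: funepos_ge0.
  - exact: measurable_funepos.
  - exact: measurable_funepos.
  - move=> x Dx; apply: (@funepos_le _ _ D) => [y|]; last by rewrite inE.
    by rewrite inE; exact: fg.
apply: (@ge0_le_integral _ _ _ mu D mD).
- by move=> x _; exact: funeneg_ge0.
- exact: measurable_funeneg.
- exact: measurable_funeneg.
- move=> x Dx; apply: (@funeneg_le _ _ D) => [y|]; last by rewrite inE.
  by rewrite inE; exact: fg.
Qed.

Section Mech.
Variables (R : realType) (m : nat).
Definition z0 : m.-tuple R := [tuple (0:R) | i < m].

Lemma types_z0 : @types R m z0.
Proof. by move=> i; rewrite tnth_mktuple. Qed.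

Lemma types_rect : @types R m = rect (fun _ : 'I_m => `[(0:R), +oo[%classic).
Proof.
by apply/seteqP; split => v /= H i; have := H i; rewrite /= in_itv /= andbT.
Qed.

Lemma types_meas : measurable (@types R m).
Proof. by rewrite types_rect; apply: rect_measurable => i; exact: measurable_itv. Qed.

Lemma p_ge q p : IC_IR_mechanism q p -> forall v, types v -> p z0 <= p v.
Proof.
case=> _ ic _ _ v tv; have := ic z0 v types_z0 tv.
rewrite /utility !big1 ?sub0r ?lerN2// => i _; by rewrite tnth_mktuple mul0r.
Qed.

Lemma shift_mech q p : IC_IR_mechanism q p ->
  IC_IR_mechanism q (fun v => p v - p z0).
Proof.
move=> M; case: (M) => q01 ic ir mp.
have uE v v' : utility q (fun v => p v - p z0) v v' = utility q p v v' + p z0.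
  by rewrite /utility; lra.
split.
- exact: q01.
- by move=> v v' tv tv'; rewrite !uE lerD2r; exact: ic.
- move=> v tv; rewrite uE.
  have := ic v z0 tv types_z0; rewrite {1}/utility => h.
  have : 0 <= \sum_(i < m) tnth v i * q z0 i.
    apply: sumr_ge0 => i _; apply: mulr_ge0; first exact: tv.
    by case/andP: (q01 z0 types_z0 i).
  lra.
- by apply: measurable_funB => //; exact: measurable_cst.
Qed.
End Mech.

Section Main2.
Variables (R : realType) (m : nat) (F : probability R R) (a : R)
  (G : probability (m.-tuple R) R) (Gb : R -> probability (m.-tuple R) R).
Hypothesis hG : is_iid_product G F.
Hypothesis hGb : forall b, a <= b -> (0 < F `[a, b]%classic)%E ->
  is_iid_product (Gb b) (truncation F a b).

Local Notation box := (@box R m a).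
Local Notation K b := ((fine (F `[a, b]%classic) ^+ m)^-1).

Lemma intGb b : a <= b -> (0 < F `[a, b]%classic)%E ->
  forall f, measurable_fun (@types R m) f -> (forall x, types x -> (0 <= f x)%E) ->
  (\int[Gb b]_(x in @types R m) f x =
  (K b)%:E * \int[G]_(x in @types R m `&` box b) f x)%E.
Proof.
move=> ab Fb f mf f0.
have mT := @types_meas R m.
have mB := @box_meas R m a b.
have E : @types R m = (@types R m `&` box b) `|` (@types R m `\` box b).
  apply/seteqP; split => v; last by case=> -[].
  by move=> tv; case: (pselect (box b v)) => h; [left|right].
have GbE' := GbE hG hGb ab Fb.
rewrite [in LHS]E integral_setU //; last first.
- by rewrite disj_set2E; apply/eqP/seteqP; split => v // [[_ h1] [_ h2]].
- by rewrite -E.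
- exact: measurableD.
- exact: measurableI.
rewrite [X in (_ + X)%E]null_set_integral ?adde0//; last first.
- apply: (eq_trans (GbE' _ (measurableD mT mB))).
  rewrite (_ : _ `&` _ = set0) ?measure0 ?mule0//.
  by apply/seteqP; split => v // [[_ h1] h2].
- by apply: measurable_funS mf => //; exact: subDsetl.
- exact: measurableD.
have K0 : 0 <= K b by rewrite invr_ge0 exprn_ge0// fine_ge0// measure_ge0.
rewrite (eq_measure_integral (mscale (NngNum K0) G)); last first.
  move=> A mA AT; apply: (eq_trans (GbE' _ mA)); congr (_ * G _)%E.
  by apply/seteqP; split => [v [] //|v Av]; split => //; case: (AT v Av).
rewrite ge0_integral_mscale //.
- exact: measurableI.
- by apply: measurable_funS mf => //; exact: subIsetl.
- by move=> x [tx _]; exact: f0.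
Qed.

Hypothesis hF : F `[a, +oo[%classic = 1%E.

Lemma c_near e : 0 < e -> e <= 1 -> exists b1, a <= b1 /\
  forall b, b1 <= b -> (0 < F `[a, b]%classic)%E /\ 1 - e < fine (F `[a, b]%classic).
Proof.
move=> e0 e1.
pose S n : set R := `[a, a + n%:R]%classic.
have mS n : measurable (S n) by exact: measurable_itv.
have US : \bigcup_n S n = `[a, +oo[%classic.
  apply/seteqP; split => x /=.
    by case=> n _; rewrite /S /= !in_itv /= andbT => /andP[].
  rewrite in_itv /= andbT => ax; exists (Num.Def.archi_bound (x - a)) => //.
  rewrite /S /= in_itv /= ax /=.
  have h := @archi_boundP R (x - a) ltac:(by rewrite subr_ge0).
  by rewrite -lerBlDl ltW.
have ndS : nondecreasing_seq S.
  move=> i j ij; apply/subsetPset => x; rewrite /S /= !in_itv /= => /andP[-> xi] /=.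
  by apply: (le_trans xi); rewrite lerD2l ler_nat.
have cvgS := @nondecreasing_cvg_mu _ _ _ F S mS (eq_ind_r measurable (measurable_itv _) US) ndS.
have cvgS1 : (F \o S @ \oo --> 1%E)%classic by rewrite -hF -US; exact: cvgS.
have [n hn] : exists n, ((1 - e)%:E < F (S n))%E.
  apply/not_existsP => H.
  have : (lim (F \o S @ \oo) <= (1 - e)%:E)%E.
    apply: lime_le; first by apply/cvg_ex; exists 1%E.
    by apply: nearW => k; rewrite leNgt; apply/negP; exact: H.
  by rewrite (cvg_lim _ cvgS1)// lee_fin; lra.
exists (a + n%:R); split; first by rewrite lerDl.
move=> b nb.
have le1 : (F (S n) <= F `[a, b]%classic)%E.
  apply: le_measure; rewrite ?inE; [exact: mS|exact: measurable_itv|].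
  move=> x; rewrite /S /= !in_itv /= => /andP[-> xn] /=; exact: le_trans xn nb.
have := lt_le_trans hn le1.
rewrite probE; last exact: measurable_itv.
rewrite lte_fin => h; split => /=; rewrite ?lte_fin; lra.
Qed.

Definition Q : set (m.-tuple R) := rect (fun _ : 'I_m => `[a, +oo[%classic).

Lemma Q_meas : measurable Q.
Proof. by apply: rect_measurable => i; exact: measurable_itv. Qed.

Lemma GQc : G (~` Q) = 0%E.
Proof.
rewrite probability_setC; last exact: Q_meas.
rewrite /Q (hG (fun i => measurable_itv _)) big1 ?subee// => i _; exact: hF.
Qed.

Lemma int_types_le (f : m.-tuple R -> \bar R) (l : \bar R) :
  measurable_fun (@types R m) f -> (forall x, types x -> (0 <= f x)%E) ->
  (forall n : nat, \int[G]_(x in @types R m `&` box (a + n%:R)) f x <= l)%E ->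
  (\int[G]_(x in @types R m) f x <= l)%E.
Proof.
move=> mf f0 hl.
have mT := @types_meas R m.
have mQ := Q_meas.
have E : @types R m = (@types R m `&` Q) `|` (@types R m `\` Q).
  apply/seteqP; split => v; last by case=> -[].
  by move=> tv; case: (pselect (Q v)) => h; [left|right].
rewrite [in X in (X <= _)%E]E integral_setU //; last first.
- by rewrite disj_set2E; apply/eqP/seteqP; split => v // [[_ h1] [_ h2]].
- by rewrite -E.
- exact: measurableD.
- exact: measurableI.
rewrite [X in (_ + X <= _)%E]null_set_integral ?adde0//; last first.
- apply/eqP; rewrite eq_le measure_ge0 andbT -GQc.
  apply: le_measure; rewrite ?inE; [exact: measurableD|exact: measurableC|].
  by move=> v [].
- by apply: measurable_funS mf => //; exact: subDsetl.
- exact: measurableD.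
set D := @types R m `&` Q.
have mD : measurable D by exact: measurableI.
pose g' (n : nat) := f \_ (box (a + n%:R)).
have mg' n : measurable_fun D (g' n).
  apply/(measurable_restrict f (@box_meas R m a (a + n%:R)) mD).
  by apply: measurable_funS mf => // v [[]].
have g'0 n x : D x -> (0 <= g' n x)%E.
  by move=> [tx _]; rewrite /g' /patch; case: ifP => // _; exact: f0.
have nd_g' : forall x, D x -> nondecreasing_seq (g'^~ x).
  move=> x Dx i j ij; rewrite /g' /patch.
  case: ifPn => [/set_mem hi|_]; last by case: ifP => // _; case: Dx => tx _; exact: f0.
  rewrite ifT //; apply/mem_set => k; have := hi k; rewrite /= !in_itv /=.
  by case/andP => -> h /=; apply: (le_trans h); rewrite lerD2l ler_nat.
have cv := @cvg_monotone_convergence _ _ _ G D mD g' mg' g'0 nd_g'.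
have -> : (\int[G]_(x in D) f x = \int[G]_(x in D) limn (g'^~ x))%E.
  apply: eq_integral => x /[!inE] -[tx Qx].
  apply/esym/cvg_lim => //; apply: cvg_near_cst.
  have s0 : 0 <= \sum_(i < m) (tnth x i - a).
    apply: sumr_ge0 => i _; have := Qx i; rewrite /= in_itv /= andbT subr_ge0.
    by [].
  exists (Num.Def.archi_bound (\sum_(i < m) (tnth x i - a))) => // n /= Nn.
  rewrite /g' /patch ifT //; apply/mem_set => i /=.
  have := Qx i; rewrite /= !in_itv /= andbT => -> /=.
  rewrite -lerBlDl.
  apply: (@le_trans _ _ (Num.Def.archi_bound (\sum_(i < m) (tnth x i - a)))%:R); last first.
    by rewrite ler_nat.
  apply: le_trans (ltW (archi_boundP s0)).
  rewrite (bigD1 i) //= lerDl; apply: sumr_ge0 => j _.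
  by have := Qx j; rewrite /= in_itv /= andbT subr_ge0.
rewrite -(cvg_lim _ cv) //; apply: lime_le; first by apply/cvg_ex; eexists; exact: cv.
apply: nearW => n; rewrite -integral_mkcondr.
apply: le_trans (hl n); apply: ge0_subset_integral => //.
- by apply: measurableI => //; exact: box_meas.
- by apply: measurableI => //; exact: box_meas.
- by apply: measurable_funS mf => // v [].
- by move=> x [tx _]; exact: f0.
- by move=> v [[tv _] bv]; split.
Qed.
End Main2.

Lemma bernoulli_ineq (R : realType) (n : nat) (x : R) : 0 <= x -> x <= 1 ->
  1 - n%:R * x <= (1 - x) ^+ n.
Proof.
move=> x0 x1; elim: n => [|n IH]; first by rewrite mul0r subr0 expr0.
rewrite exprS -natr1.
have h1 : (1 - x) * (1 - n%:R * x) <= (1 - x) * (1 - x) ^+ n.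
  by apply: ler_wpM2l => //; lra.
have hn : 0 <= n%:R :> R by [].
have hx : 0 <= n%:R * x * x by rewrite -mulrA mulr_ge0// mulr_ge0.
lra.
Qed.

Lemma p0_le0 (R : realType) (m : nat) q p : @IC_IR_mechanism R m q p -> p (@z0 R m) <= 0.
Proof.
case=> _ _ ir _; have := ir _ (@types_z0 R m).
by rewrite /utility big1 ?sub0r ?oppr_ge0// => i _; rewrite tnth_mktuple mul0r.
Qed.

Lemma Rev_ge0 (R : realType) (m : nat) (G : probability (m.-tuple R) R) : (0 <= Rev G)%E.
Proof.
apply: ereal_sup_ubound; exists (fun _ _ => 0), (fun _ => 0); split.
  split.
  - by move=> v _ i; rewrite lexx ler01.
  - by move=> v v' _ _; rewrite /utility.
  - by move=> v _; rewrite /utility big1 ?subr0// => i _; rewrite mulr0.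
  - exact: measurable_cst.
by rewrite integral0_eq.
Qed.

Section Final.
Variables (R : realType) (m : nat) (F : probability R R) (a : R)
  (G : probability (m.-tuple R) R) (Gb : R -> probability (m.-tuple R) R).
Hypothesis hG : is_iid_product G F.
Hypothesis hGb : forall b, a <= b -> (0 < F `[a, b]%classic)%E ->
  is_iid_product (Gb b) (truncation F a b).
Hypothesis hF : F `[a, +oo[%classic = 1%E.

Local Notation box := (@box R m a).
Local Notation K b := ((fine (F `[a, b]%classic) ^+ m)^-1).
Local Notation tys := (@types R m).
Local Notation z := (z0 R m).

Lemma K_ge1 b : (0 < F `[a, b]%classic)%E -> 1 <= K b.
Proof.
move=> Fb; have mI : measurable (`[a, b]%classic : set R) by exact: measurable_itv.
have c0 : 0 < fine (F `[a, b]%classic) by rewrite -lte_fin -probE.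
have c1 : fine (F `[a, b]%classic) <= 1.
  by rewrite -lee_fin -probE//; exact: probability_le1.
have cm0 : 0 < fine (F `[a, b]%classic) ^+ m by exact: exprn_gt0.
by rewrite invr_ge1 ?unitf_gt0// exprn_ile1// ltW.
Qed.

Lemma revGb_le b : a <= b -> (0 < F `[a, b]%classic)%E ->
  (Rev (Gb b) <= (K b)%:E * Rev G)%E.
Proof.
move=> ab Fb; apply: ge_ereal_sup => _ [q [p [M ->]]].
have M' := shift_mech M.
have pg := p_ge M.
have p0 := p0_le0 M.
have mp : measurable_fun tys p by case: M.
have mp' : measurable_fun tys (fun v => p v - p z) by case: M'.
have mT := @types_meas R m.
apply: (@le_trans _ _ (\int[Gb b]_(x in tys) (p x - p z)%:E)%E).
  apply: int_mono => //; [exact/measurable_EFinP|exact/measurable_EFinP|].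
  by move=> x tx; rewrite lee_fin; lra.
rewrite (intGb hG hGb ab Fb); first last.
- by move=> x tx; rewrite lee_fin subr_ge0; exact: pg.
- exact/measurable_EFinP.
apply: lee_wpmul2l; first by rewrite lee_fin (le_trans ler01 (K_ge1 Fb)).
apply: le_trans; last first.
  apply: ereal_sup_ubound; exists q, (fun v => p v - p z); by split.
apply: ge0_subset_integral => //;
  try (by apply: measurableI => //; exact: box_meas);
  try (exact/measurable_EFinP);
  try (by move=> x tx; rewrite lee_fin subr_ge0; exact: pg).
Qed.

Lemma lb q p : IC_IR_mechanism q p -> forall b0 b, a <= b0 -> b0 <= b ->
  (0 < F `[a, b]%classic)%E ->
  (\int[G]_(x in tys `&` box b0) (p x - p z)%:E <= Rev (Gb b))%E.
Proof.
move=> M b0 b ab0 b0b Fb.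
have ab : a <= b by exact: le_trans b0b.
have M' := shift_mech M.
have pg := p_ge M.
have mp' : measurable_fun tys (fun v => p v - p z) by case: M'.
have mT := @types_meas R m.
apply: le_trans; last first.
  apply: ereal_sup_ubound; exists q, (fun v => p v - p z); by split.
rewrite /= (intGb hG hGb ab Fb); first last.
- by move=> x tx; rewrite lee_fin subr_ge0; exact: pg.
- exact/measurable_EFinP.
apply: le_trans; last first.
  apply: lee_pemull; first by apply: integral_ge0 => x [tx _]; rewrite lee_fin subr_ge0; exact: pg.
  by rewrite lee_fin; exact: K_ge1.
apply: ge0_subset_integral => //.
- by apply: measurableI => //; exact: box_meas.
- by apply: measurableI => //; exact: box_meas.
- by apply/measurable_EFinP; apply: measurable_funS mp' => //; exact: subIsetl.
- by move=> x [tx _]; rewrite lee_fin subr_ge0; exact: pg.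
- move=> v [tv bv]; split => // i; have := bv i; rewrite /= !in_itv /= => /andP[-> h].
  exact: le_trans h b0b.
Qed.

Lemma cm_near d : 0 < d -> d <= 1 -> exists b1, a <= b1 /\
  forall b, b1 <= b -> (0 < F `[a, b]%classic)%E /\
    1 - d <= fine (F `[a, b]%classic) ^+ m.
Proof.
move=> d0 d1.
have m0 : 0 < m%:R + 1 :> R by rewrite ltr_wpDl.
pose e := d / (m%:R + 1).
have e0 : 0 < e by rewrite divr_gt0.
have e1 : e <= 1.
  rewrite /e ler_pdivrMr // mul1r; have : 0 <= m%:R :> R by []. lra.
have [b1 [ab1 Hb]] := c_near hF e0 e1.
exists b1; split => // b b1b; have [Fb hc] := Hb b b1b; split => //.
have mI : measurable (`[a, b]%classic : set R) by exact: measurable_itv.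
have c1 : fine (F `[a, b]%classic) <= 1.
  by rewrite -lee_fin -probE//; exact: probability_le1.
set c := fine (F `[a, b]%classic) in hc c1 *.
have := @bernoulli_ineq R m (1 - c) ltac:(lra) ltac:(lra).
rewrite (_ : 1 - (1 - c) = c); last by lra.
have hme : m%:R * e <= d.
  rewrite /e mulrA ler_pdivrMr //; have : 0 <= m%:R :> R by []. nra.
have hm : 0 <= m%:R :> R by [].
have : m%:R * (1 - c) <= m%:R * e by apply: ler_wpM2l => //; lra.
lra.
Qed.
End Final.

Unset Implicit Arguments.
Set Strict Implicit.

Theorem theorem5 (R : realType) (m : nat) (F : probability R R) (a : R)
  (G : probability (m.-tuple R) R) (Gb : R -> probability (m.-tuple R) R) :
  0 <= a ->
  F `[a, +oo[%classic = 1%E ->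
  is_iid_product G F ->
  (forall b, a <= b -> (0 < F `[a, b]%classic)%E -> is_iid_product (Gb b) (truncation F a b)) ->
  (Rev G < +oo)%E ->
  forall l : R, Rev (Gb b) @[b --> +oo] --> l%:E ->
  l%:E = Rev G.
Proof.
move=> ha hF hG hGb hRev l hl.
have cvl : cvg (Rev (Gb b) @[b --> +oo]) by apply/cvg_ex; exists l%:E.
have Ll : lim (Rev (Gb b) @[b --> +oo]) = l%:E by exact: cvg_lim.
have R0 := Rev_ge0 G.
have RE : Rev G = (fine (Rev G))%:E by rewrite fineK // ge0_fin_numE.
set r := fine (Rev G) in RE.
have r0 : 0 <= r by rewrite -lee_fin -RE.
apply/eqP; rewrite eq_le; apply/andP; split.
  have key : forall d, 0 < d -> d < 1 -> l * (1 - d) <= r.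
    move=> d d0 d1.
    have [b1 [ab1 Hb]] := cm_near m hF d0 (ltW d1).
    have : (l%:E <= ((1 - d)^-1 * r)%:E)%E.
      rewrite -Ll; apply: lime_le => //.
      exists b1; split; first exact: num_real.
      move=> b b1b; have [Fb hc] := Hb b (ltW b1b).
      apply: le_trans (revGb_le hG hGb (le_trans ab1 (ltW b1b)) Fb) _.
      rewrite RE -EFinM lee_fin; apply: ler_wpM2r => //.
      have cm0 : 0 < fine (F `[a, b]%classic) ^+ m by apply: (lt_le_trans _ hc); lra.
      by rewrite lef_pV2 ?posrE// subr_gt0.
    rewrite lee_fin mulrC -ler_pdivlMr ?subr_gt0//.
  rewrite RE lee_fin.
  case: (lerP l 0) => [l0|l0]; first by lra.
  apply/ler_addgt0Pr => e e0.
  pose d := e / (l + e).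
  have le0 : 0 < l + e by lra.
  have d0 : 0 < d by rewrite divr_gt0.
  have d1 : d < 1 by rewrite /d ltr_pdivrMr // mul1r; lra.
  have ld : l * d <= e.
    rewrite /d mulrA ler_pdivrMr //; nra.
  have := key d d0 d1; nra.
apply: ge_ereal_sup => _ [q [p [M ->]]].
have M' := shift_mech M.
have pg := p_ge M.
have p0 := p0_le0 M.
have mp : measurable_fun (@types R m) p by case: M.
have mp' : measurable_fun (@types R m) (fun v => p v - p (z0 R m)) by case: M'.
have mT := @types_meas R m.
apply: (@le_trans _ _ (\int[G]_(x in @types R m) (p x - p (z0 R m))%:E)%E).
  apply: int_mono => //; [exact/measurable_EFinP|exact/measurable_EFinP|].
  by move=> x tx; rewrite lee_fin; lra.
apply: (int_types_le hG hF).
- exact/measurable_EFinP.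
- by move=> x tx; rewrite lee_fin subr_ge0; exact: pg.
move=> n.
have [b1 [ab1 Hb]] := cm_near m hF (ltr01 : (0:R) < 1) (lexx 1).
rewrite -Ll; apply: lime_ge => //.
exists (Num.max b1 (a + n%:R)); split; first exact: num_real.
move=> b; rewrite gt_max => /andP[h1 h2].
have [Fb _] := Hb b (ltW h1).
apply: (lb hG hGb M) => //; [by rewrite lerDl | exact: ltW].
Qed.
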